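(* Let $u\in\Omega_0^M$. For every node $v$ of the binary tree $B_\Lambda(u)$ with descendents $v_l,v_r$, one has $\tau(v)\le\tau(v_l)$ and $\tau(v)\le\tau(v_r)$, with at least one of these inequalities strict. In particular $\tau$ is non-decreasing along every path in $B_\Lambda(u)$ starting at the root $u$.
   Context: $\kappa(x,y,z)=-x^2-y^2+z^2+xyz-2$; for $u=(x,y,z)$ set $\bar z(u)=-xy-z$ and $\tau(u)=-z\,\bar z(u)$. $Q_x(x,y,z)=(yz-x,y,z)$, $Q_y(x,y,z)=(x,xz-y,z)$, $Q_z(x,y,z)=(x,y,-xy-z)$ (involutions preserving $\kappa$), and $\Lambda=\langle Q_x,Q_y,Q_z\rangle$. $\Omega_0^M=\{(x,y,z): z<-2,\ xy+z>2\}$. For $u\in\Omega_0^M$ the binary tree $B_\Lambda(u)$ is defined inductively: $u$ is the root; its two descendents are $Q_x(u)$ (left) and $Q_y(u)$ (right); if $v\ne u$ is a node with parent $\hat v$ and $v=\lambda\hat v$ with $\lambda\in\{Q_x,Q_y,Q_z\}$, then the two descendents of $v$ are $\lambda_1v$ and $\lambda_2 v$ where $\{\lambda_1,\lambda_2\}=\{Q_x,Q_y,Q_z\}\setminus\{\lambda\}$. *)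

(* Defs.v *)
From Stdlib Require Import Reals.
Open Scope R_scope.

Definition pt : Type := (R * R * R)%type.

Definition kappa (u : pt) : R :=
  let '(x, y, z) := u in - x^2 - y^2 + z^2 + x*y*z - 2.

Definition zbar (u : pt) : R := let '(x, y, z) := u in - x*y - z.

Definition tau (u : pt) : R := let '(x, y, z) := u in - z * zbar u.

Definition Qx (u : pt) : pt := let '(x, y, z) := u in (y*z - x, y, z).
Definition Qy (u : pt) : pt := let '(x, y, z) := u in (x, x*z - y, z).
Definition Qz (u : pt) : pt := let '(x, y, z) := u in (x, y, - x*y - z).

Definition Omega0M (u : pt) : Prop :=
  let '(x, y, z) := u in z < -2 /\ x*y + z > 2.

Inductive gen := GX | GY | GZ.

Definition act (g : gen) : pt -> pt :=
  match g with GX => Qx | GY => Qy | GZ => Qz end.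

(* Labels of the two descendents (left, right) of a node, given the generator
   by which the node was obtained from its parent (None for the root). *)
Definition kids (l : option gen) : gen * gen :=
  match l with
  | None => (GX, GY)
  | Some GX => (GY, GZ)
  | Some GY => (GX, GZ)
  | Some GZ => (GX, GY)
  end.

(* Nodes of B_Lambda(u), as tree positions: [node u v l] means that some node
   of the tree carries the value v and was obtained from its parent by the
   generator l (l = None exactly for the root). *)
Inductive node (u : pt) : pt -> option gen -> Prop :=
| node_root : node u u None
| node_left : forall v l, node u v l ->
    node u (act (fst (kids l)) v) (Some (fst (kids l)))
| node_right : forall v l, node u v l ->
    node u (act (snd (kids l)) v) (Some (snd (kids l))).

(* Main.v *)
Require Import Defs.
From Stdlib Require Import Reals Lra Psatz.
Open Scope R_scope.

Definition Inv (v : pt) (l : option gen) : Prop :=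
  let '(x, y, z) := v in
  match l with
  | None | Some GZ => x*y*z < 0 /\ z*z > 4
  | Some GX => x*y*z > 0 /\ z*z > 4 /\ x*x*(z*z) > 4*(y*y)
  | Some GY => x*y*z > 0 /\ z*z > 4 /\ y*y*(z*z) > 4*(x*x)
  end.

Lemma tauQx x y z : tau (Qx (x,y,z)) - tau (x,y,z) = (y*z-x)*(y*z-x) - x*x.
Proof. simpl. ring. Qed.
Lemma tauQy x y z : tau (Qy (x,y,z)) - tau (x,y,z) = (x*z-y)*(x*z-y) - y*y.
Proof. simpl. ring. Qed.
Lemma tauQz x y z : tau (Qz (x,y,z)) = tau (x,y,z).
Proof. simpl. ring. Qed.

Lemma ZX x y z : x*y*z < 0 -> z*z > 4 ->
  (y*z-x)*y*z > 0 /\ z*z > 4 /\ (y*z-x)*(y*z-x)*(z*z) > 4*(y*y)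
  /\ (y*z-x)*(y*z-x) - x*x > 0.
Proof.
  intros h1 h2.
  assert (hy : y*y > 0).
  { destruct (Req_dec y 0) as [e|e]. subst. nra. nra. }
  assert (hyz : (y*z)*(y*z) > 0) by nra.
  assert (hA : (y*z-x)*(y*z-x) >= (y*z)*(y*z)) by nra.
  split; [nra|split;[lra|split]].
  - assert ((y*z)*(y*z)*(z*z) > 4*(y*y)).
    { replace ((y*z)*(y*z)*(z*z)) with ((y*y)*((z*z)*(z*z))) by ring. nra. }
    nra.
  - nra.
Qed.

Lemma ZY x y z : x*y*z < 0 -> z*z > 4 ->
  x*(x*z-y)*z > 0 /\ z*z > 4 /\ (x*z-y)*(x*z-y)*(z*z) > 4*(x*x)
  /\ (x*z-y)*(x*z-y) - y*y > 0.
Proof.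
  intros h1 h2. destruct (ZX y x z) as (a&b&c&d); [nra|lra|].
  repeat split; nra.
Qed.

Lemma XY x y z : x*y*z > 0 -> z*z > 4 -> x*x*(z*z) > 4*(y*y) ->
  x*(x*z-y)*z > 0 /\ z*z > 4 /\ (x*z-y)*(x*z-y)*(z*z) > 4*(x*x)
  /\ (x*z-y)*(x*z-y) - y*y > 0.
Proof.
  intros h1 h2 h3.
  assert (hx : x*x > 0).
  { destruct (Req_dec x 0) as [e|e]. subst. nra. nra. }
  assert (k1 : (x*z)*(x*z) > 2*(x*y*z)).
  { assert (((x*z)*(x*z) - 2*(x*y*z)) * ((x*z)*(x*z) + 2*(x*y*z)) > 0).
    { replace (((x*z)*(x*z) - 2*(x*y*z)) * ((x*z)*(x*z) + 2*(x*y*z)))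
        with ((x*x)*(z*z)*((x*x)*(z*z) - 4*(y*y))) by ring.
      apply Rmult_lt_0_compat; nra. }
    nra. }
  split; [nra|split;[lra|split]].
  -
    set (yp := x*z - y).
    assert (e1 : yp*(x*z) > (x*z)*(x*z)/2) by (unfold yp; nra).
    assert (e2 : yp*(x*z) > 0) by nra.
    assert (e3 : (yp*(x*z))*(yp*(x*z)) > ((x*z)*(x*z)/2)*((x*z)*(x*z)/2)) by nra.
    assert (e4 : yp*yp > (x*z)*(x*z)/4).
    { assert (hxz : (x*z)*(x*z) > 0) by nra.
      replace ((yp*(x*z))*(yp*(x*z))) with ((yp*yp)*((x*z)*(x*z))) in e3 by ring.
      replace (((x*z)*(x*z)/2)*((x*z)*(x*z)/2)) with (((x*z)*(x*z)/4)*((x*z)*(x*z))) in e3 by field.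
      nra. }
    assert (e5 : (x*z)*(x*z)/4*(z*z) > 4*(x*x)).
    { replace ((x*z)*(x*z)/4*(z*z)) with ((x*x)*((z*z)*(z*z)/4)) by field. nra. }
    nra.
  - nra.
Qed.

Lemma YX x y z : x*y*z > 0 -> z*z > 4 -> y*y*(z*z) > 4*(x*x) ->
  (y*z-x)*y*z > 0 /\ z*z > 4 /\ (y*z-x)*(y*z-x)*(z*z) > 4*(y*y)
  /\ (y*z-x)*(y*z-x) - x*x > 0.
Proof.
  intros h1 h2 h3. destruct (XY y x z) as (a&b&c&d); [nra|lra|lra|].
  repeat split; nra.
Qed.

Lemma XZ x y z : x*y*z > 0 -> z*z > 4 -> x*y*(-x*y-z) < 0 /\ (-x*y-z)*(-x*y-z) > 4.
Proof. intros h1 h2. split; nra. Qed.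

Lemma step (u v : pt) (l : option gen) : node u v l -> Inv v l ->
  let vl := act (fst (kids l)) v in
  let vr := act (snd (kids l)) v in
  (Inv vl (Some (fst (kids l))) /\ Inv vr (Some (snd (kids l))))
  /\ (tau v <= tau vl /\ tau v <= tau vr /\ (tau v < tau vl \/ tau v < tau vr)).
Proof.
  intros _ hI. destruct v as [[x y] z].
  destruct l as [[| |]|]; simpl in hI |- *.
  - destruct hI as (a&b&c).
    destruct (XY x y z a b c) as (p&q&r&s).
    destruct (XZ x y z a b) as (p'&q').
    pose proof (tauQy x y z). pose proof (tauQz x y z). simpl in *.
    repeat split; try lra; nra.
  - destruct hI as (a&b&c).
    destruct (YX x y z a b c) as (p&q&r&s).
    destruct (XZ x y z a b) as (p'&q').
    pose proof (tauQx x y z). pose proof (tauQz x y z). simpl in *.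
    repeat split; try lra; nra.
  - destruct hI as (a&b).
    destruct (ZX x y z a b) as (p&q&r&s).
    destruct (ZY x y z a b) as (p'&q'&r'&s').
    pose proof (tauQx x y z). pose proof (tauQy x y z). simpl in *.
    repeat split; try lra.
  - destruct hI as (a&b).
    destruct (ZX x y z a b) as (p&q&r&s).
    destruct (ZY x y z a b) as (p'&q'&r'&s').
    pose proof (tauQx x y z). pose proof (tauQy x y z). simpl in *.
    repeat split; try lra.
Qed.

Lemma inv_all (u : pt) (hu : Omega0M u) : forall v l, node u v l -> Inv v l.
Proof.
  intros v l H. induction H.
  - destruct u as [[x y] z]; simpl in *. destruct hu. split; nra.
  - exact (proj1 (proj1 (step u v l H IHnode))).
  - exact (proj2 (proj1 (step u v l H IHnode))).
Qed.

Theorem mainTheorem8 (u : pt) (hu : Omega0M u) :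
  (forall (v : pt) (l : option gen), node u v l ->
     let vl := act (fst (kids l)) v in
     let vr := act (snd (kids l)) v in
     tau v <= tau vl /\ tau v <= tau vr /\ (tau v < tau vl \/ tau v < tau vr))
  /\ (forall (v : pt) (l : option gen), node u v l -> tau u <= tau v).
Proof.
  split.
  - intros v l H. exact (proj2 (step u v l H (inv_all u hu v l H))).
  - intros v l H. induction H.
    + lra.
    + pose proof (proj2 (step u v l H (inv_all u hu v l H))) as [h _]. simpl in h. lra.
    + pose proof (proj2 (step u v l H (inv_all u hu v l H))) as [_ [h _]]. simpl in h. lra.
Qed.
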